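(* Let $k\ge 1$ and let $0\le b_0<b_1<\dots<b_k$ and $r_0>r_1>\dots>r_k=0$ be reals, let $s_i=\frac{b_i-b_{i-1}}{r_{i-1}-r_i}$ for $1\le i\le k$, and assume $s_1<\dots<s_k$. Let $p^i_1(t)=\min\{1,(e^{t/s_i}-1)/(e-1)\}$ for $1\le i\le k$, and define the profile $\hat p=(\hat p_0,\dots,\hat p_k)$ by $\hat p_0=1-p^1_1$, $\hat p_i=p^i_1-p^{i+1}_1$ for $1\le i\le k-1$, $\hat p_k=p^k_1$. Then for every $t\ge 0$, $$X_{\hat p}(t)\le \frac{e}{e-1}\,\textsc{opt}(t),$$ i.e. the expected cost of the online strategy with profile $\hat p$ is at most $\frac{e}{e-1}$ times the optimal offline cost, for every termination time $t$.
   Context: Additive multislope ski rental: states $0,\dots,k$, state $i$ has buying cost $b_i$ and rental rate $r_i$; holding state $i$ for duration $t$ costs $b_i+r_i t$, and moving from state $i$ to state $j>i$ costs $b_j-b_i$. The optimal offline cost for a game of length $t$ is $\textsc{opt}(t)=\min_i(b_i+r_it)$. For a profile $p=(p_0(t),\dots,p_k(t))$ (nonnegative functions summing to $1$ for every $t$, $p_i(t)$ being the probability of being in state $i$ at time $t$), the expected buying cost is $B_p(t)=\sum_i p_i(t)b_i$, the expected rental rate is $R_p(t)=\sum_ip_i(t)r_i$, and the expected total cost up to time $t$ is $X_p(t)=B_p(t)+\int_0^tR_p(z)\,dz$. *)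

(* Defs.v *)
From Stdlib Require Import Reals Lra.
From Coquelicot Require Import Coquelicot.
Open Scope R_scope.

(* States are 0..k; b i = buying cost, r i = rental rate of state i. *)

Fixpoint opt_upto (b r : nat -> R) (n : nat) (t : R) : R :=
  match n with
  | O => b O + r O * t
  | S m => Rmin (opt_upto b r m t) (b n + r n * t)
  end.
Definition OPT (k : nat) (b r : nat -> R) (t : R) : R := opt_upto b r k t.

(* A profile p : nat -> R -> R, p i t = probability of being in state i at time t. *)
Definition Bp (k : nat) (b : nat -> R) (p : nat -> R -> R) (t : R) : R :=
  sum_f_R0 (fun i => p i t * b i) k.
Definition Rp (k : nat) (r : nat -> R) (p : nat -> R -> R) (t : R) : R :=
  sum_f_R0 (fun i => p i t * r i) k.
Definition Xp (k : nat) (b r : nat -> R) (p : nat -> R -> R) (t : R) : R :=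
  Bp k b p t + RInt (Rp k r p) 0 t.

Definition slope (b r : nat -> R) (i : nat) : R :=
  (b i - b (i - 1)%nat) / (r (i - 1)%nat - r i).

Definition p1 (b r : nat -> R) (i : nat) (t : R) : R :=
  Rmin 1 ((exp (t / slope b r i) - 1) / (exp 1 - 1)).

Definition phat (k : nat) (b r : nat -> R) (i : nat) (t : R) : R :=
  if Nat.eqb i 0 then 1 - p1 b r 1 t
  else if Nat.ltb i k then p1 b r i t - p1 b r (S i) t
  else if Nat.eqb i k then p1 b r k t
  else 0.

(* Main.v *)
Require Import Defs.
From Stdlib Require Import Reals Lra Lia.
From Coquelicot Require Import Coquelicot.
Open Scope R_scope.

Lemma e_gt2 : 2 < exp 1.
Proof. pose proof (exp_ineq1 1 ltac:(lra)). lra. Qed.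

Lemma exp_le' x y : x <= y -> exp x <= exp y.
Proof. intros [H|H]. left; now apply exp_increasing. subst; lra. Qed.

Definition qf (s z : R) := Rmin 1 ((exp (z / s) - 1) / (exp 1 - 1)).
Definition Ff (s t : R) := if Rle_dec t s then (s*(exp (t/s)-1)-t)/(exp 1-1)
  else (s*(exp 1-1)-s)/(exp 1-1) + (t - s).

Lemma qf_low s z : 0 < s -> z <= s -> qf s z = (exp (z / s) - 1) / (exp 1 - 1).
Proof.
  intros Hs Hz. unfold qf. pose proof e_gt2.
  assert (exp (z/s) <= exp 1). { apply exp_le'. apply (Rmult_le_reg_r s); auto.
    field_simplify; lra. }
  apply Rmin_right. apply (Rmult_le_reg_r (exp 1 - 1)); [lra|]. field_simplify; lra.
Qed.

Lemma qf_high s z : 0 < s -> s <= z -> qf s z = 1.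
Proof.
  intros Hs Hz. unfold qf. pose proof e_gt2.
  assert (exp 1 <= exp (z/s)). { apply exp_le'. apply (Rmult_le_reg_r s); auto.
    field_simplify; lra. }
  apply Rmin_left. apply (Rmult_le_reg_r (exp 1 - 1)); [lra|]. field_simplify; lra.
Qed.

Lemma int_low s t : 0 < s -> 0 <= t -> t <= s ->
  is_RInt (qf s) 0 t ((s*(exp (t/s)-1)-t)/(exp 1-1)).
Proof.
  intros Hs Ht Hts. pose proof e_gt2.
  apply is_RInt_ext with (f := fun z => (exp (z / s) - 1) / (exp 1 - 1)).
  { intros x Hx. rewrite Rmin_left in Hx by lra. rewrite Rmax_right in Hx by lra.
    symmetry; apply qf_low; lra. }
  replace ((s*(exp (t/s)-1)-t)/(exp 1-1)) with
    (minus ((fun z => (s * exp (z/s) - z)/(exp 1 - 1)) t)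
           ((fun z => (s * exp (z/s) - z)/(exp 1 - 1)) 0)).
  2:{ unfold minus, plus, opp; simpl. replace (0/s) with 0 by (field; lra).
      rewrite exp_0. field. lra. }
  apply (is_RInt_derive (fun z => (s * exp (z/s) - z)/(exp 1 - 1))).
  - intros x _. auto_derive. lra. unfold Rdiv. field. lra.
  - intros x _. apply continuity_pt_filterlim.
    apply derivable_continuous_pt. 
    apply derivable_pt_div. 3: lra.
    apply derivable_pt_minus. 2: apply derivable_pt_const.
    apply derivable_pt_comp with (f1 := fun z => z / s).
    apply derivable_pt_div. apply derivable_pt_id. apply derivable_pt_const. lra.
    apply derivable_pt_exp. apply derivable_pt_const.
Qed.

Lemma int_q s t : 0 < s -> 0 <= t -> is_RInt (qf s) 0 t (Ff s t).
Proof.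
  intros Hs Ht. pose proof e_gt2. unfold Ff. destruct (Rle_dec t s) as [H1|H1].
  - now apply int_low.
  - replace ((s*(exp 1-1)-s)/(exp 1-1) + (t - s)) with
      (plus ((s*(exp (s/s)-1)-s)/(exp 1-1)) (scal (t - s) 1)).
    2:{ unfold plus, scal; simpl. unfold mult; simpl. replace (s/s) with 1 by (field; lra). ring. }
    apply (is_RInt_Chasles (qf s) 0 s t). apply int_low; lra.
    apply is_RInt_ext with (f := fun _ => 1).
    { intros x Hx. rewrite Rmin_left in Hx by lra. symmetry; apply qf_high; lra. }
    apply (is_RInt_const s t 1).
Qed.

Lemma key s t : 0 < s -> 0 <= t ->
  s * qf s t - Ff s t = t/(exp 1 - 1) + exp 1/(exp 1 - 1) * Rmin 0 (s - t).
Proof.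
  intros Hs Ht. pose proof e_gt2. unfold Ff. destruct (Rle_dec t s) as [H1|H1].
  - rewrite qf_low by lra. rewrite Rmin_left by lra. field. lra.
  - rewrite qf_high by lra. rewrite Rmin_right by lra. field. lra.
Qed.

Fixpoint sm (f : nat -> R) (n : nat) : R :=
  match n with O => 0 | S m => sm f m + f m end.

Lemma sm_ext f g n : (forall j, (j < n)%nat -> f j = g j) -> sm f n = sm g n.
Proof. induction n; intros H; simpl; auto. rewrite IHn by (intros; apply H; lia). rewrite H by lia. auto. Qed.
Lemma sm_plus f g n : sm (fun j => f j + g j) n = sm f n + sm g n.
Proof. induction n; simpl; [lra|]. rewrite IHn; ring. Qed.
Lemma sm_minus f g n : sm (fun j => f j - g j) n = sm f n - sm g n.
Proof. induction n; simpl; [lra|]. rewrite IHn; ring. Qed.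
Lemma sm_scal a f n : sm (fun j => a * f j) n = a * sm f n.
Proof. induction n; simpl; [lra|]. rewrite IHn; ring. Qed.
Lemma sm_le f g n : (forall j, (j < n)%nat -> f j <= g j) -> sm f n <= sm g n.
Proof. induction n; intros H; simpl; [lra|]. pose proof (H n ltac:(lia)).
  pose proof (IHn ltac:(intros; apply H; lia)). lra. Qed.
Lemma sm_tail f n m : (n <= m)%nat -> (forall j, (n <= j < m)%nat -> f j <= 0) -> sm f m <= sm f n.
Proof. induction 1 as [|m Hle IHle]; intros H; [lra|]. simpl. pose proof (H m ltac:(lia)).
  pose proof (IHle ltac:(intros; apply H; lia)). lra. Qed.
Lemma sm_tele x n : sm (fun j => x j - x (S j)) n = x O - x n.
Proof. induction n; simpl; [lra|]. rewrite IHn; ring. Qed.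

Lemma tele (Q x : nat -> R) n :
  sum_f_R0 (fun i => (Q i - Q (S i)) * x i) n =
  Q O * x O - Q (S n) * x n - sm (fun i => Q (S i) * (x i - x (S i))) n.
Proof. induction n; simpl; [ring|]. rewrite IHn. ring. Qed.

Lemma phat_sum m b r t (x : nat -> R) :
  sum_f_R0 (fun i => phat (S m) b r i t * x i) (S m) =
  x O - sm (fun j => p1 b r (S j) t * (x j - x (S j))) (S m).
Proof.
  set (Q := fun i => match i with O => 1 | S _ => p1 b r i t end).
  change (sum_f_R0 (fun i => phat (S m) b r i t * x i) m + phat (S m) b r (S m) t * x (S m) =
    x O - sm (fun j => p1 b r (S j) t * (x j - x (S j))) (S m)).
  rewrite (sum_eq _ (fun i => (Q i - Q (S i)) * x i)).
  2:{ intros i Hi. f_equal. unfold phat, Q. destruct i as [|i].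
      - reflexivity.
      - replace (Nat.eqb (S i) 0) with false by reflexivity.
        replace (Nat.ltb (S i) (S m)) with true by (symmetry; apply Nat.ltb_lt; lia).
        reflexivity. }
  rewrite tele. unfold phat.
  replace (Nat.eqb (S m) 0) with false by reflexivity.
  rewrite Nat.ltb_irrefl, Nat.eqb_refl.
  change (sm (fun j => p1 b r (S j) t * (x j - x (S j))) (S m)) with
    (sm (fun j => p1 b r (S j) t * (x j - x (S j))) m + p1 b r (S m) t * (x m - x (S m))).
  unfold Q. simpl. ring.
Qed.

Lemma is_RInt_sm (g : nat -> R -> R) (V : nat -> R) a c n :
  (forall j, (j < n)%nat -> is_RInt (g j) a c (V j)) ->
  is_RInt (fun z => sm (fun j => g j z) n) a c (sm V n).
Proof.
  induction n; intros H; simpl.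
  - pose proof (is_RInt_const a c 0) as H0.
    revert H0. unfold scal; simpl; unfold mult; simpl. rewrite Rmult_0_r. auto.
  - apply (is_RInt_plus (fun z => sm (fun j => g j z) n) (g n)).
    apply IHn; intros; apply H; lia. apply H; lia.
Qed.
Lemma sm_tele' x n : sm (fun j => x (S j) - x j) n = x n - x O.
Proof. induction n; simpl; [lra|]. rewrite IHn; ring. Qed.
Lemma sm_zero n : sm (fun _ => 0) n = 0.
Proof. induction n; simpl; [lra|]. rewrite IHn; ring. Qed.

Definition dd (r : nat -> R) j := r j - r (S j).
Definition ss (b r : nat -> R) j := slope b r (S j).

Lemma int_qd s d t : 0 < s -> 0 <= t -> is_RInt (fun z => qf s z * d) 0 t (Ff s t * d).
Proof.
  intros Hs Ht. pose proof (is_RInt_scal (qf s) 0 t d _ (int_q s t Hs Ht)) as H.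
  apply (is_RInt_ext (fun y => scal d (qf s y))).
  { intros; unfold scal; simpl; unfold mult; simpl; ring. }
  replace (Ff s t * d) with (scal d (Ff s t)) by (unfold scal; simpl; unfold mult; simpl; ring).
  exact H.
Qed.

Lemma opt_bound m b r t
  (hb : forall i : nat, (i < S m)%nat -> b i < b (S i))
  (hr : forall i : nat, (i < S m)%nat -> r (S i) < r i) :
  forall n, (n <= S m)%nat ->
  b O + r O * t + sm (fun j => dd r j * Rmin 0 (ss b r j - t)) (S m) <= opt_upto b r n t.
Proof.
  assert (Hterm : forall n, (n <= S m)%nat ->
    b O + r O * t + sm (fun j => dd r j * Rmin 0 (ss b r j - t)) (S m) <= b n + r n * t).
  { intros n Hn.
    assert (E : b n + r n * t = b O + r O * t + sm (fun j => (b (S j) - b j) - dd r j * t) n).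
    { rewrite sm_minus, sm_tele'.
      rewrite (sm_ext _ (fun j => t * (r j - r (S j)))) by (intros; unfold dd; ring).
      rewrite sm_scal, sm_tele. ring. }
    rewrite E.
    assert (sm (fun j => dd r j * Rmin 0 (ss b r j - t)) (S m) <=
            sm (fun j => dd r j * Rmin 0 (ss b r j - t)) n).
    { apply sm_tail; auto. intros j Hj. pose proof (hr j ltac:(lia)).
      unfold dd. assert (Rmin 0 (ss b r j - t) <= 0) by apply Rmin_l. nra. }
    assert (sm (fun j => dd r j * Rmin 0 (ss b r j - t)) n <=
            sm (fun j => (b (S j) - b j) - dd r j * t) n).
    { apply sm_le. intros j Hj. pose proof (hr j ltac:(lia)). pose proof (hb j ltac:(lia)).
      assert (Es : b (S j) - b j = ss b r j * dd r j).
      { unfold ss, slope, dd. replace (S j - 1)%nat with j by lia. field. lra. }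
      rewrite Es. assert (Rmin 0 (ss b r j - t) <= ss b r j - t) by apply Rmin_r.
      unfold dd in *. nra. }
    lra. }
  induction n; intros Hn; simpl.
  - apply (Hterm O); lia.
  - apply Rmin_glb. apply IHn; lia. apply Hterm; auto.
Qed.

Theorem theorem3p4 (k : nat) (b r : nat -> R)
  (hk : (1 <= k)%nat)
  (hb0 : 0 <= b 0%nat)
  (hb : forall i : nat, (i < k)%nat -> b i < b (S i))
  (hr : forall i : nat, (i < k)%nat -> r (S i) < r i)
  (hrk : r k = 0)
  (hs : forall i : nat, (1 <= i)%nat -> (i < k)%nat -> slope b r i < slope b r (S i)) :
  forall t : R, 0 <= t ->
    Xp k b r (phat k b r) t <= exp 1 / (exp 1 - 1) * OPT k b r t.
Proof.
  intros t Ht. destruct k as [|m]; [lia|]. clear hs.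
  pose proof e_gt2 as He.
  assert (Hd : forall j, (j < S m)%nat -> 0 < dd r j).
  { intros j Hj; unfold dd; pose proof (hr j Hj); lra. }
  assert (Hbs : forall j, (j < S m)%nat -> b (S j) - b j = ss b r j * dd r j).
  { intros j Hj. pose proof (hr j Hj). unfold ss, slope, dd. replace (S j - 1)%nat with j by lia. field. lra. }
  assert (Hsp : forall j, (j < S m)%nat -> 0 < ss b r j).
  { intros j Hj. pose proof (hr j Hj). pose proof (hb j Hj). unfold ss, slope.
    replace (S j - 1)%nat with j by lia. apply Rdiv_lt_0_compat; lra. }
  assert (HRp : forall z, Rp (S m) r (phat (S m) b r) z =
     r O - sm (fun j => qf (ss b r j) z * dd r j) (S m)).
  { intros z. unfold Rp. rewrite phat_sum. reflexivity. }
  assert (HI : is_RInt (Rp (S m) r (phat (S m) b r)) 0 t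
     (minus (scal (t - 0) (r O)) (sm (fun j => Ff (ss b r j) t * dd r j) (S m)))).
  { apply (is_RInt_ext (fun z => minus (r O) (sm (fun j => qf (ss b r j) z * dd r j) (S m)))).
    { intros z _. rewrite HRp. reflexivity. }
    apply (is_RInt_minus (fun _ => r O) (fun z => sm (fun j => qf (ss b r j) z * dd r j) (S m))).
    apply (is_RInt_const 0 t (r O)).
    apply (is_RInt_sm (fun j z => qf (ss b r j) z * dd r j)).
    intros j Hj. apply int_qd; auto. }
  apply (is_RInt_unique (V := R_CompleteNormedModule)) in HI.
  assert (HI' : RInt (Rp (S m) r (phat (S m) b r)) 0 t =
     t * r O - sm (fun j => Ff (ss b r j) t * dd r j) (S m)).
  { rewrite HI. unfold minus, plus, opp, scal; simpl; unfold mult; simpl. ring. }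
  unfold Xp. rewrite HI'. unfold Bp. rewrite phat_sum.
  set (M := sm (fun j => dd r j * Rmin 0 (ss b r j - t)) (S m)).
  assert (E1 : sm (fun j => p1 b r (S j) t * (b j - b (S j))) (S m) =
               - sm (fun j => dd r j * (ss b r j * qf (ss b r j) t)) (S m)).
  { apply Rplus_eq_reg_r with (sm (fun j => dd r j * (ss b r j * qf (ss b r j) t)) (S m)).
    rewrite <- sm_plus. rewrite (sm_ext _ (fun _ => 0)). rewrite sm_zero. ring.
    intros j Hj. pose proof (Hbs j Hj). unfold p1. fold (qf (ss b r j) t).
    change (slope b r (S j)) with (ss b r j). fold (qf (ss b r j) t).
    replace (b j - b (S j)) with (- (ss b r j * dd r j)) by lra. ring. }
  assert (E2 : sm (fun j => dd r j * (ss b r j * qf (ss b r j) t)) (S m) -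
               sm (fun j => Ff (ss b r j) t * dd r j) (S m) =
               t / (exp 1 - 1) * sm (dd r) (S m) + exp 1 / (exp 1 - 1) * M).
  { rewrite <- sm_minus. unfold M. rewrite <- !sm_scal, <- sm_plus. apply sm_ext.
    intros j Hj. pose proof (key (ss b r j) t (Hsp j Hj) Ht) as K.
    replace (dd r j * (ss b r j * qf (ss b r j) t) - Ff (ss b r j) t * dd r j)
      with (dd r j * (ss b r j * qf (ss b r j) t - Ff (ss b r j) t)) by ring.
    rewrite K. ring. }
  assert (E3 : sm (dd r) (S m) = r O).
  { change (sm (fun j => r j - r (S j)) (S m) = r O). rewrite sm_tele. lra. }
  rewrite E3 in E2.
  assert (HO : b O + r O * t + M <= OPT (S m) b r t).
  { apply opt_bound; auto. }
  rewrite E1.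
  assert (Hc : exp 1 / (exp 1 - 1) = 1 + 1 / (exp 1 - 1)) by (field; lra).
  assert (Hu : 0 < 1 / (exp 1 - 1)) by (apply Rdiv_lt_0_compat; lra).
  assert (Ht' : t / (exp 1 - 1) * r O = 1 / (exp 1 - 1) * (r O * t)) by (field; lra).
  rewrite Ht' in E2. rewrite Hc in E2 |- *.
  set (u := 1 / (exp 1 - 1)) in *.
  assert (u * (b O + r O * t + M) <= u * OPT (S m) b r t) by (apply Rmult_le_compat_l; lra).
  assert (0 <= u * b O) by nra.
  nra.
Qed.
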